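(* A set $\mathbf D$ of tilings is a closed Condorcet super-domain if and only if it is a median super-domain, i.e. for any $T_1,T_2,T_3\in\mathbf D$ the set $(T_1\cap T_2)\cup(T_2\cap T_3)\cup(T_1\cap T_3)$ belongs to $\mathbf D$.
   Context: Fix an integer $n\ge 3$ and write $[n]=\{1,\dots,n\}$. Let $\Lambda$ be the set of 3-element subsets of $[n]$; a triple $\{i,j,k\}$ with $i<j<k$ is written $ijk$. For a 4-element subset $F=\{i<j<k<l\}$ of $[n]$, the stick of $F$ is the sequence $(ijk,\ ijl,\ ikl,\ jkl)$. A tiling (the inversion set of a rhombus tiling of the zonogon $Z(n;2)$) is a subset $T\subseteq\Lambda$ such that for every 4-element $F\subseteq[n]$, $T\cap\mathrm{stick}(F)$ is an initial segment or a final segment of the stick (empty set and whole stick allowed). For a finite set $V$ of odd cardinality and tilings $(T_v)_{v\in V}$, $sm((T_v)_{v\in V})$ is the set of triples lying in $T_v$ for more than $|V|/2$ indices $v$. A set $\mathbf D$ of tilings is a Condorcet super-domain if for every finite $V$ of odd cardinality and every family $(T_v)_{v\in V}$ with all $T_v\in\mathbf D$, $sm((T_v)_{v\in V})$ is a tiling; it is closed if moreover $sm((T_v)_{v\in V})\in\mathbf D$ for all such $V$ and families. *)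

(* Defs.v *)
From mathcomp Require Import all_boot.
Set Implicit Arguments. Unset Strict Implicit. Unset Printing Implicit Defensive.

(* [n] is modelled by 'I_n (elements 0..n-1, with the natural order).
   A triple ijk is the 3-element set [set i; j; k] : {set 'I_n}.
   A set of triples is an element of {set {set 'I_n}}. *)

Definition triples (n : nat) : {set {set 'I_n}} := [set A : {set 'I_n} | #|A| == 3].

Definition stick n (i j k l : 'I_n) : seq {set 'I_n} :=
  [:: [set i; j; k]; [set i; j; l]; [set i; k; l]; [set j; k; l]].

Definition init_or_final (b : seq bool) : Prop :=
  exists m, m <= 4 /\
    (b = nseq m true ++ nseq (4 - m) false \/
     b = nseq m false ++ nseq (4 - m) true).

Definition tiling n (T : {set {set 'I_n}}) : Prop :=
  T \subset triples n /\
  forall i j k l : 'I_n, i < j -> j < k -> k < l ->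
    init_or_final [seq (A \in T) | A <- stick i j k l].

Definition sm n (V : finType) (T : V -> {set {set 'I_n}}) : {set {set 'I_n}} :=
  [set A : {set 'I_n} in triples n | #|V| < 2 * #|[set v | A \in T v]|].

Definition condorcet_superdomain n (D : {set {set {set 'I_n}}}) : Prop :=
  forall (V : finType) (T : V -> {set {set 'I_n}}),
    odd #|V| -> (forall v, T v \in D) -> tiling (sm T).

Definition closed_condorcet_superdomain n (D : {set {set {set 'I_n}}}) : Prop :=
  condorcet_superdomain D /\
  forall (V : finType) (T : V -> {set {set 'I_n}}),
    odd #|V| -> (forall v, T v \in D) -> sm T \in D.

Definition median_superdomain n (D : {set {set {set 'I_n}}}) : Prop :=
  forall T1 T2 T3, T1 \in D -> T2 \in D -> T3 \in D ->
    (T1 :&: T2) :|: (T2 :&: T3) :|: (T1 :&: T3) \in D.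

(* Main.v *)
Require Import Defs.
From mathcomp Require Import all_boot.
From mathcomp Require Import zify.

Definition f3 {T:Type} (b1 b2 b3 : T) (v : 'I_3) :=
  match val v with 0 => b1 | 1 => b2 | _ => b3 end.

Lemma card_f3 (b1 b2 b3 : bool) :
  (3 < 2 * #|[set v | f3 b1 b2 b3 v]|) = [|| b1 && b2, b2 && b3 | b1 && b3].
Proof.
rewrite cardsE -sum1_card big_mkcond /= !big_ord_recl big_ord0 /=.
by case: b1; case: b2; case: b3.
Qed.

Lemma med_mem n (y1 y2 y3 : {set {set 'I_n}}) e q :
  ((e \in y1) = q /\ (e \in y2) = q) \/ ((e \in y2) = q /\ (e \in y3) = q)
  \/ ((e \in y1) = q /\ (e \in y3) = q) ->
  (e \in (y1 :&: y2) :|: (y2 :&: y3) :|: (y1 :&: y3)) = q.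
Proof.
rewrite !inE.
by case: (e \in y1); case: (e \in y2); case: (e \in y3); case: q;
  intuition; try discriminate.
Qed.

Lemma inter_nonempty (V : finType) (A B : {set V}) :
  #|V| < 2 * #|A| -> #|V| < 2 * #|B| -> exists v, (v \in A) && (v \in B).
Proof.
move=> hA hB.
have hU := cardsU A B.
have hm : #|A :|: B| <= #|V| by apply: max_card.
have : 0 < #|A :&: B| by lia.
case/card_gt0P => v; rewrite inE => hv; by exists v.
Qed.

Section Rev.
Variable n : nat.
Variable D : {set {set {set 'I_n}}}.
Hypothesis hD : forall T, T \in D -> tiling T.
Hypothesis hmed : median_superdomain D.
Variable V : finType.
Variable T : V -> {set {set 'I_n}}.
Hypothesis hodd : odd #|V|.
Hypothesis hT : forall v, T v \in D.

Let x := sm T.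

Lemma V_pos : 0 < #|V|.
Proof. by move: hodd; case: #|V|. Qed.

Lemma maj_agree a : #|V| < 2 * #|[set v | (a \in T v) == (a \in x)]|.
Proof.
have hV := V_pos.
rewrite /x /sm inE; case ha: (a \in triples n) => /=.
- case hc: (#|V| < 2 * #|[set v | a \in T v]|).
  + suff -> : [set v | (a \in T v) == true] = [set v | a \in T v] by [].
    by apply/setP => v; rewrite !inE eqb_id.
  + have -> : [set v | (a \in T v) == false] = ~: [set v | a \in T v].
      by apply/setP => v; rewrite !inE eqbF_neg.
    have hC := cardsC [set v | a \in T v].

    set c := #|[set v | a \in T v]| in hc hC *.
    have hne : 2 * c != #|V|.
      apply/negP => /eqP h; move: hodd; by rewrite -h mul2n odd_double.
    move/negbT: hc; rewrite -leqNgt => hc.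
    have : 2 * c < #|V| by rewrite ltn_neqAle hne hc.
    move=> hh; rewrite -[X in X < _]hC; rewrite -[X in _ < X]hC in hh; lia.
- have -> : [set v | (a \in T v) == false] = setT.
    apply/setP => v; rewrite !inE; apply/eqP/negbTE/negP => hav.
    have [hs _] := hD _ (hT v).
    by move: (subsetP hs a hav); rewrite ha.
  rewrite cardsT; have hh : #|V| < 2 * #|V| by lia. exact: hh.
Qed.

Lemma agree_all : forall S : {set {set 'I_n}},
  exists2 y, y \in D & {in S, forall e, (e \in y) = (e \in x)}.
Proof.
move=> S; move: {2}#|S|.+1 (ltnSn #|S|) => m; elim: m S => [//|m IH] S hS.
have [->|/set0Pn [a aS]] := eqVneq S set0.
  have := V_pos; case/card_gt0P => v _.
  exists (T v); first exact: hT. by move=> e; rewrite inE.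
have [S1e|/set0Pn [b bS1]] := eqVneq (S :\ a) set0.
  have [v /andP [] ] := inter_nonempty _ _ _ (maj_agree a) (maj_agree a).
  rewrite !inE => /eqP ha _.
  exists (T v); first exact: hT. move=> e eS.
  have : e \in S :\ a = false by rewrite S1e inE.
  by rewrite !inE eS andbT => /negbFE /eqP ->.
have [S2e|/set0Pn [c cS2]] := eqVneq (S :\ a :\ b) set0.
  have [v /andP [] ] := inter_nonempty _ _ _ (maj_agree a) (maj_agree b).
  rewrite !inE => /eqP ha /eqP hb.
  exists (T v); first exact: hT. move=> e eS.
  have : e \in S :\ a :\ b = false by rewrite S2e inE.
  rewrite !inE eS andbT.
  case: (eqVneq e b) => [-> //|_] /=.
  by move/negbFE/eqP ->.
move: bS1 cS2; rewrite !inE => /andP [nba bS] /andP [ncb /andP [nca cS]].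
have lt x0 : x0 \in S -> #|S :\ x0| < m.
  move=> h; have := cardsD1 x0 S; rewrite h; lia.
have [y1 y1D h1] := IH _ (lt _ aS).
have [y2 y2D h2] := IH _ (lt _ bS).
have [y3 y3D h3] := IH _ (lt _ cS).
exists ((y1 :&: y2) :|: (y2 :&: y3) :|: (y1 :&: y3)); first by apply: hmed.
move=> e eS; apply: med_mem.
have H1 : e != a -> (e \in y1) = (e \in x) by move=> h; apply: h1; rewrite !inE h.
have H2 : e != b -> (e \in y2) = (e \in x) by move=> h; apply: h2; rewrite !inE h.
have H3 : e != c -> (e \in y3) = (e \in x) by move=> h; apply: h3; rewrite !inE h.
case: (eqVneq e a) => [ea|nea].
  subst e; right; left; split; [apply: H2 | apply: H3]; by rewrite eq_sym.
case: (eqVneq e b) => [eb|neb].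
  subst e; right; right; split; [apply: H1 | apply: H3] => //; by rewrite eq_sym.
by left; split; [apply: H1 | apply: H2].
Qed.

Lemma sm_in_D : sm T \in D.
Proof.
have [y yD hy] := agree_all setT.
suff <- : y = sm T by [].
by apply/setP => e; apply: hy.
Qed.

End Rev.

Theorem mainTheorem8 (n : nat) (D : {set {set {set 'I_n}}}) :
  3 <= n ->
  (forall T, T \in D -> tiling T) ->
  closed_condorcet_superdomain D <-> median_superdomain D.
Proof.
move=> _ hD; split.
- move=> [_ hcl] T1 T2 T3 h1 h2 h3.
  have hV : odd #|'I_3| by rewrite card_ord.
  have := hcl _ (f3 T1 T2 T3) hV.
  have hf : forall v, f3 T1 T2 T3 v \in D.
    by move=> [[|[|k]] ?].
  move=> /(_ hf).
  suff -> : sm (f3 T1 T2 T3) = (T1 :&: T2) :|: (T2 :&: T3) :|: (T1 :&: T3) by [].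
  apply/setP => A; rewrite /sm !inE card_ord.
  have -> : [set v | A \in f3 T1 T2 T3 v] = [set v | f3 (A \in T1) (A \in T2) (A \in T3) v].
    by apply/setP => -[[|[|k]] ?]; rewrite !inE.
  rewrite card_f3.
  case hA: (#|A| == 3) => /=; first by rewrite orbA.
  have sub : forall Ti, Ti \in D -> A \notin Ti.
    move=> Ti hi; apply/negP => hAi; have [hs _] := hD _ hi.
    by move: (subsetP hs A hAi); rewrite inE hA.
  by rewrite (negbTE (sub _ h1)) (negbTE (sub _ h2)) (negbTE (sub _ h3)).
- move=> hmed.
  have cl : forall (V : finType) (T : V -> {set {set 'I_n}}),
      odd #|V| -> (forall v, T v \in D) -> sm T \in D.
    by move=> V T ho hT; apply: sm_in_D.
  split => // V T ho hT; apply: hD; exact: cl.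
Qed.
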